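(* Let $G = K_m \otimes K_n$ with $m \geq 3$ and $m \leq n \leq 2m-2$. Then $\dim(G) = \left\lceil \frac{2}{3}(m+n-2) \right\rceil$.
   Context: $K_r$ is the complete graph on $r$ vertices. The tensor product $G\otimes H$ has vertex set $V(G)\times V(H)$, with $(u,v)$ adjacent to $(x,y)$ iff $ux\in E(G)$ and $vy\in E(H)$. For a connected graph and an ordered set $W=\{w_1,\dots,w_k\}$ of vertices, $r(v\mid W)=(d(v,w_1),\dots,d(v,w_k))$; $W$ is resolving if distinct vertices have distinct representations; $\dim(G)$ is the minimum size of a resolving set. *)

(* Defs.v *)
From mathcomp Require Import all_boot.
Set Implicit Arguments. Unset Strict Implicit. Unset Printing Implicit Defensive.

Definition complete_graph (r : nat) : rel 'I_r := fun i j => i != j.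

Definition tensor_graph (T U : finType) (g : rel T) (h : rel U) : rel (T * U) :=
  fun p q => g p.1 q.1 && h p.2 q.2.

Section Dist.
Variables (T : finType) (e : rel T).

Definition walk_of_length (k : nat) (u v : T) : bool :=
  [exists p : k.-tuple T, path e u p && (last u p == v)].

(* graph distance: least k with a walk of length k from u to v
   (for connected graphs this is the usual distance; it is #|T| if v is
   unreachable, which never happens in a connected graph). *)
Definition gdist (u v : T) : nat :=
  find (fun k => walk_of_length k u v) (iota 0 #|T|).

Definition resolving (W : {set T}) : bool :=
  [forall u, forall v, [forall w in W, gdist u w == gdist v w] ==> (u == v)].

(* metric dimension: minimum size of a resolving set
   (the full vertex set is always resolving, so #|T| is a valid default). *)
Definition metric_dim : nat :=
  \big[minn/#|T|]_(W : {set T} | resolving W) #|W|.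
End Dist.
Arguments complete_graph r : clear implicits.

(* Main.v *)
Require Import Defs.
From mathcomp Require Import all_boot zify.
Set Implicit Arguments. Unset Strict Implicit. Unset Printing Implicit Defensive.

Section Walks.
Variables (T : finType) (e : rel T).
Lemma walk0 u v : walk_of_length e 0 u v = (u == v).
Proof.
apply/existsP/eqP => [[p]|->]; last by exists [tuple]; rewrite /= eqxx.
by rewrite tuple0 /= => /eqP.
Qed.
Lemma walk1 u v : walk_of_length e 1 u v = e u v.
Proof.
apply/existsP/idP => [[[[|x [|y s]] //= _]]|H].
  by rewrite andbT => /andP[H /eqP <-].
by exists [tuple v]; rewrite /= H eqxx.
Qed.
Lemma walk2 u x v : e u x -> e x v -> walk_of_length e 2 u v.
Proof. by move=> H1 H2; apply/existsP; exists [tuple x; v]; rewrite /= H1 H2 eqxx. Qed.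
End Walks.

Section Dist.
Variables (m n : nat).
Hypotheses (hm : 3 <= m) (hn : 3 <= n).
Definition G := tensor_graph (complete_graph m) (complete_graph n).
Definition sh (u w : 'I_m * 'I_n) := (u.1 == w.1) || (u.2 == w.2).
Definition dd (u w : 'I_m * 'I_n) := if u == w then 0 else if sh u w then 2 else 1.

Lemma avoid2 k (a b : 'I_k) : 3 <= k -> exists i : 'I_k, (i != a) && (i != b).
Proof.
move=> hk; case: (pickP (fun i => (i != a) && (i != b))) => [i Hi|H]; first by exists i.
have : #|[set: 'I_k]| <= #|[set a; b]|.
  apply: subset_leq_card; apply/subsetP => i _; rewrite !inE.
  by move: (H i) => /= /negbT; rewrite negb_and !negbK orbC.
by rewrite cardsT card_ord cards2; case: (a != b) => /=; lia.
Qed.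

Lemma gdistE u w : gdist G u w = dd u w.
Proof.
rewrite /gdist card_prod !card_ord.
have -> : m * n = (m * n - 3).+3 by nia.
rewrite /= walk0 walk1 /dd.
case: eqP => [//|neq].
rewrite /G /tensor_graph /complete_graph /sh /=.
case: ifP => [/andP[/negbTE H1 /negbTE H2]|H]; first by rewrite H1 H2.
have -> : (u.1 == w.1) || (u.2 == w.2) by move: H; rewrite -negb_or => /negbFE.
have [i Hi] := avoid2 u.1 w.1 hm.
have [j Hj] := avoid2 u.2 w.2 hn.
move: Hi Hj => /andP[Hi1 Hi2] /andP[Hj1 Hj2].
rewrite (@walk2 _ _ _ (i, j)) //= /tensor_graph /complete_graph /=.
  by rewrite eq_sym Hi1 eq_sym Hj1.
by rewrite Hi2 Hj2.
Qed.
End Dist.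

Section Res.
Variables (m n : nat).
Hypotheses (hm : 3 <= m) (hn : 3 <= n).
Variable W : {set 'I_m * 'I_n}.
Definition erow i := forall w, w \in W -> w.1 <> i.
Definition ecol j := forall w, w \in W -> w.2 <> j.
Definition lonely w := w \in W /\ forall w', w' \in W -> (w'.1 = w.1 \/ w'.2 = w.2) -> w' = w.
Definition Pel :=
  [/\ forall i1 i2, erow i1 -> erow i2 -> i1 = i2,
      forall j1 j2, ecol j1 -> ecol j2 -> j1 = j2,
      forall w1 w2, lonely w1 -> lonely w2 -> w1 = w2 &
      forall w i j, lonely w -> erow i -> ecol j -> False].

Lemma resP : resolving (@G m n) W <->
  (forall u v : 'I_m * 'I_n, (forall w, w \in W -> dd u w = dd v w) -> u = v).
Proof.
split.
  move=> /forallP H u v Hd; apply/eqP; move/forallP: (H u) => /(_ v) /implyP; apply.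
  by apply/forall_inP => w hw; rewrite !gdistE // Hd.
move=> H; apply/forallP => u; apply/forallP => v; apply/implyP => /forall_inP Hd.
by apply/eqP/H => w hw; move: (Hd w hw); rewrite !gdistE // => /eqP.
Qed.

Lemma pairE (u w : 'I_m * 'I_n) : (u == w) = (u.1 == w.1) && (u.2 == w.2).
Proof. by case: u w => [a b] [c d]. Qed.

Lemma dd_eq (u v w : 'I_m * 'I_n) :
  (u.1 == w.1) && (u.2 == w.2) = (v.1 == w.1) && (v.2 == w.2) ->
  (u.1 == w.1) || (u.2 == w.2) = (v.1 == w.1) || (v.2 == w.2) -> dd u w = dd v w.
Proof. by rewrite /dd /sh !pairE => -> ->. Qed.

Lemma neqF (T : eqType) (a b : T) : a <> b -> (a == b) = false.
Proof. by move/eqP/negbTE. Qed.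

Lemma res_Pel : resolving (@G m n) W -> Pel.
Proof.
move/resP => res; split.
- move=> i1 i2 E1 E2.
  have c0 : 0 < n by lia.
  pose c := Ordinal c0.
  suff : (i1, c) = (i2, c) by case.
  apply: res => -[a b] hw.
  have f1 : (i1 == a) = false by apply: neqF => h; apply: (E1 _ hw); rewrite /= h.
  have f2 : (i2 == a) = false by apply: neqF => h; apply: (E2 _ hw); rewrite /= h.
  by apply: dd_eq; rewrite /= f1 f2.
- move=> j1 j2 E1 E2.
  have r0 : 0 < m by lia.
  pose r := Ordinal r0.
  suff : (r, j1) = (r, j2) by case.
  apply: res => -[a b] hw.
  have f1 : (j1 == b) = false by apply: neqF => h; apply: (E1 _ hw); rewrite /= h.
  have f2 : (j2 == b) = false by apply: neqF => h; apply: (E2 _ hw); rewrite /= h.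
  by apply: dd_eq; rewrite /= f1 f2 ?andbF ?orbF.
- move=> [r1 c2] [r2 c1] [W1 L1] [W2 L2].
  case: (eqVneq r1 r2) => [er|nr].
    by apply/esym/L1 => //; left; rewrite er.
  case: (eqVneq c1 c2) => [ec|nc].
    by apply/esym/L1 => //; right; rewrite ec.
  suff : (r1, c1) = (r2, c2) by case=> /eqP; rewrite (negbTE nr).
  apply: res => -[a b] hw.
  case: (boolP ((a == r1) || (b == c2))) => [/orP h|h1].
    have -> : (a, b) = (r1, c2) by apply: L1 => //; case: h => /eqP ->; [left|right].
    by apply: dd_eq; rewrite /= ?eqxx ?orbT // (negbTE nc) eq_sym (negbTE nr).
  case: (boolP ((a == r2) || (b == c1))) => [/orP h|h2].
    have -> : (a, b) = (r2, c1) by apply: L2 => //; case: h => /eqP ->; [left|right].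
    by apply: dd_eq; rewrite /= ?eqxx ?orbT // (negbTE nr) eq_sym (negbTE nc).
  move: h1 h2; rewrite !negb_or => /andP[h1 h2] /andP[h3 h4].
  by apply: dd_eq; rewrite /= ![_ == a]eq_sym ![_ == b]eq_sym (negbTE h1) (negbTE h2) (negbTE h3) (negbTE h4).
- move=> [r1 c2] r2 c1 [W1 L1] E2 E1.
  have nc : c1 != c2 by apply/eqP => h; apply: (E1 _ W1); rewrite h.
  have nr : r1 != r2 by apply/eqP => h; apply: (E2 _ W1); rewrite h.
  suff : (r1, c1) = (r2, c2) by case=> /eqP; rewrite (negbTE nr).
  apply: res => -[a b] hw.
  case: (boolP ((a == r1) || (b == c2))) => [/orP h|h1].
    have -> : (a, b) = (r1, c2) by apply: L1 => //; case: h => /eqP ->; [left|right].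
    by apply: dd_eq; rewrite /= ?eqxx ?orbT // (negbTE nc) eq_sym (negbTE nr).
  have h3 : a != r2 by apply/eqP => h; apply: (E2 _ hw); rewrite /= h.
  have h4 : b != c1 by apply/eqP => h; apply: (E1 _ hw); rewrite /= h.
  move: h1; rewrite !negb_or => /andP[h1 h2].
  by apply: dd_eq; rewrite /= ![_ == a]eq_sym ![_ == b]eq_sym (negbTE h1) (negbTE h2) (negbTE h3) (negbTE h4).
Qed.

Lemma Pel_res : Pel -> resolving (@G m n) W.
Proof.
case=> P1 P2 P3 P4; apply/resP => -[r1 c1] [r2 c2] Hd.
case: (boolP ((r1, c1) \in W)) => [hu|hu].
  by move: (Hd _ hu); rewrite /dd eqxx; case: ifP => [/eqP -> //|_]; case: ifP.
case: (boolP ((r2, c2) \in W)) => [hv|hv].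
  by move: (Hd _ hv); rewrite /dd eqxx; case: ifP => [/eqP -> //|_]; case: ifP.
have Hs : forall a b, (a, b) \in W ->
    (r1 == a) || (c1 == b) = (r2 == a) || (c2 == b).
  move=> a b hw; move: (Hd _ hw); rewrite /dd /sh /=.
  have -> : ((r1, c1) == (a, b)) = false by apply: neqF => h; move: hu; rewrite h hw.
  have -> : ((r2, c2) == (a, b)) = false by apply: neqF => h; move: hv; rewrite h hw.
  by do 2 case: ifP.
case: (eqVneq r1 r2) => [er|nr]; case: (eqVneq c1 c2) => [ec|nc].
- by rewrite er ec.
- exfalso; move/eqP: (nc); apply; apply: P2 => -[a b] hw /= eb.
    move: (Hs a b hw); rewrite eb eqxx orbT -er; case: (eqVneq r1 a) => [ea|_] /=.
      by move: hu; rewrite ea -eb hw.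
    by move/esym/eqP => h; rewrite h eqxx in nc.
  move: (Hs a b hw); rewrite eb eqxx orbT er; case: (eqVneq r2 a) => [ea|_] /=.
    by move: hv; rewrite ea -eb hw.
  by move/eqP => h; rewrite h eqxx in nc.
- exfalso; move/eqP: (nr); apply; apply: P1 => -[a b] hw /= ea.
    move: (Hs a b hw); rewrite ea eqxx /= -ec; case: (eqVneq c1 b) => [eb|_] /=.
      by move: hu; rewrite eb -ea hw.
    by rewrite orbF => /esym/eqP h; rewrite h eqxx in nr.
  move: (Hs a b hw); rewrite ea eqxx /= ec; case: (eqVneq c2 b) => [eb|_] /=.
    by move: hv; rewrite eb -ea hw.
  by rewrite orbF => /eqP h; rewrite h eqxx in nr.
- exfalso.
  have HA : forall a b, (a, b) \in W -> a = r1 \/ b = c2 -> (a, b) = (r1, c2).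
    move=> a b hw [ea|eb].
      by move: (Hs a b hw); rewrite ea eqxx /= [r2 == r1]eq_sym (negbTE nr) /= => /esym/eqP ->.
    by move: (Hs a b hw); rewrite eb eqxx orbT (negbTE nc) orbF => /eqP ->.
  have HC : forall a b, (a, b) \in W -> a = r2 \/ b = c1 -> (a, b) = (r2, c1).
    move=> a b hw [ea|eb].
      by move: (Hs a b hw); rewrite ea eqxx /= (negbTE nr) /= => /eqP ->.
    by move: (Hs a b hw); rewrite eb eqxx orbT [c2 == c1]eq_sym (negbTE nc) orbF => /esym /eqP ->.
  case: (boolP ((r1, c2) \in W)) => [w1|w1]; case: (boolP ((r2, c1) \in W)) => [w2|w2].
  + have : (r1, c2) = (r2, c1).
      apply: P3; split => // -[a b] hw /= h; [exact: HA | exact: HC].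
    by case=> /eqP; rewrite (negbTE nr).
  + apply: (P4 (r1, c2) r2 c1).
    * by split => // -[a b] hw /= h; exact: HA.
    * by move=> [a b] hw /= ea; move: w2; rewrite -(HC a b hw (or_introl ea)) hw.
    * by move=> [a b] hw /= eb; move: w2; rewrite -(HC a b hw (or_intror eb)) hw.
  + apply: (P4 (r2, c1) r1 c2).
    * by split => // -[a b] hw /= h; exact: HC.
    * by move=> [a b] hw /= ea; move: w1; rewrite -(HA a b hw (or_introl ea)) hw.
    * by move=> [a b] hw /= eb; move: w1; rewrite -(HA a b hw (or_intror eb)) hw.
  + move/eqP: nr; apply; apply: P1.
    * by move=> [a b] hw /= ea; move: w1; rewrite -(HA a b hw (or_introl ea)) hw.
    * by move=> [a b] hw /= ea; move: w2; rewrite -(HC a b hw (or_introl ea)) hw.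
Qed.
End Res.

Lemma sum_le1 (T : finType) (A : {pred T}) (P : pred T) :
  (forall x y, x \in A -> y \in A -> P x -> P y -> x = y) ->
  \sum_(x in A) (P x : nat) <= 1.
Proof.
move=> H.
have -> : \sum_(x in A) (P x : nat) = #|[pred x | (x \in A) && P x]|.
  rewrite -sum1_card big_mkcondr /=; apply: eq_bigr => x _; by case: (P x).
apply/card_le1_eqP => x y /andP[hx px] /andP[hy py]; exact: H.
Qed.

Lemma sum_gt0 (T : finType) (A : {pred T}) (P : pred T) :
  0 < \sum_(x in A) (P x : nat) -> exists x, x \in A /\ P x.
Proof.
case: (pickP [pred x | (x \in A) && P x]) => [x /andP[]|H]; first by exists x.
by rewrite big1 // => x hx; move: (H x); rewrite /= hx /= => ->.
Qed.

Section Count.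
Variables (T J : finType) (p : T -> J) (W : {set T}).
Definition tc j := #|[set w in W | p w == j]|.

Lemma count_lines : 2 * \sum_j (0 < tc j) <= \sum_(w in W) (1 + (tc (p w) == 1)).
Proof.
rewrite (partition_big p predT) //= big_distrr /=; apply: leq_sum => j _.
rewrite (eq_bigr (fun _ => 1 + (tc j == 1))); last by move=> w /andP[_ /eqP ->].
have -> : \sum_(i | (i \in W) && (p i == j)) (1 + (tc j == 1)) =
          \sum_(i in [set w in W | p w == j]) (1 + (tc j == 1)).
  by apply: eq_bigl => w; rewrite inE.
rewrite sum_nat_const -/(tc j).
by case: (tc j) => [|[|t]] //=; rewrite muln1; lia.
Qed.

Lemma count_total : \sum_j (0 < tc j) + \sum_j (tc j == 0) = #|J|.
Proof.
rewrite -big_split /= -sum1_card; apply: eq_bigr => j _; by case: (tc j).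
Qed.
End Count.

Lemma arith (a1 a2 b l1 l2 s1 s2 k m n : nat) :
  a1 <= 1 -> a2 <= 1 -> b <= 1 -> ~ [/\ 0 < a1, 0 < a2 & 0 < b] ->
  l1 + a1 = m -> l2 + a2 = n -> 2 * l1 <= s1 -> 2 * l2 <= s2 -> s1 + s2 <= 3 * k + b ->
  2 * (m + n - 2) <= 3 * k.
Proof.
case: a1 => [|[|a1]]; case: a2 => [|[|a2]]; case: b => [|[|b]] //=; try lia.
by move=> _ _ _ []; split.
Qed.

Section Lower.
Variables (m n : nat).
Hypotheses (hm : 3 <= m) (hn : 3 <= n).
Variable W : {set 'I_m * 'I_n}.

Lemma lower_count : Pel W -> 2 * (m + n - 2) <= 3 * #|W|.
Proof.
case=> P1 P2 P3 P4.
set t1 := tc (fun w : 'I_m * 'I_n => w.1) W.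
set t2 := tc (fun w : 'I_m * 'I_n => w.2) W.
have C1 := count_lines (fun w : 'I_m * 'I_n => w.1) W.
have C2 := count_lines (fun w : 'I_m * 'I_n => w.2) W.
have T1 := count_total (fun w : 'I_m * 'I_n => w.1) W.
have T2 := count_total (fun w : 'I_m * 'I_n => w.2) W.
rewrite card_ord in T1; rewrite card_ord in T2.
rewrite -/t1 in C1 T1; rewrite -/t2 in C2 T2.
set b := \sum_(w in W) ((t1 w.1 == 1) && (t2 w.2 == 1)).
have Hsum : \sum_(w in W) (1 + (t1 w.1 == 1)) + \sum_(w in W) (1 + (t2 w.2 == 1))
    <= 3 * #|W| + b.
  rewrite -big_split /= -sum1_card big_distrr /= -big_split /=.
  apply: leq_sum => w _; case: (t1 w.1 == 1); case: (t2 w.2 == 1) => //.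
have E1 : forall r, t1 r == 0 -> erow W r.
  move=> r /eqP h w hw er; move: h; rewrite /t1 /tc.
  have : w \in [set w in W | w.1 == r] by rewrite inE hw er eqxx.
  by move=> hin /eqP; rewrite cards_eq0 => /eqP he; rewrite he inE in hin.
have E2 : forall c, t2 c == 0 -> ecol W c.
  move=> c /eqP h w hw er; move: h; rewrite /t2 /tc.
  have : w \in [set w in W | w.2 == c] by rewrite inE hw er eqxx.
  by move=> hin /eqP; rewrite cards_eq0 => /eqP he; rewrite he inE in hin.
have EL : forall w, w \in W -> (t1 w.1 == 1) && (t2 w.2 == 1) -> lonely W w.
  move=> w hw /andP[/cards1P[x hx] /cards1P[y hy]]; split => // w' hw' [e|e].
    have : w \in [set w0 in W | w0.1 == w.1] by rewrite inE hw eqxx.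
    have : w' \in [set w0 in W | w0.1 == w.1] by rewrite inE hw' e eqxx.
    by rewrite hx !inE => /eqP -> /eqP ->.
  have : w \in [set w0 in W | w0.2 == w.2] by rewrite inE hw eqxx.
  have : w' \in [set w0 in W | w0.2 == w.2] by rewrite inE hw' e eqxx.
  by rewrite hy !inE => /eqP -> /eqP ->.
have A1 : \sum_r (t1 r == 0) <= 1.
  by apply: sum_le1 => x y _ _ hx hy; apply: P1; apply: E1.
have A2 : \sum_c (t2 c == 0) <= 1.
  by apply: sum_le1 => x y _ _ hx hy; apply: P2; apply: E2.
have B1 : b <= 1.
  by apply: sum_le1 => x y hx hy lx ly; apply: P3; apply: EL.
have N : ~ [/\ 0 < \sum_r (t1 r == 0), 0 < \sum_c (t2 c == 0) & 0 < b].
  case=> /sum_gt0 [r [_ hr]] /sum_gt0 [c [_ hc]] /sum_gt0 [w [hw hl]].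
  exact: (P4 w r c (EL w hw hl) (E1 r hr) (E2 c hc)).
exact: (arith A1 A2 B1 N T1 T2 C1 C2 Hsum).
Qed.
End Lower.

Definition cellW m n (p : nat -> nat -> bool) : {set 'I_m * 'I_n} := [set x : 'I_m * 'I_n | p x.1 x.2].
Definition erown n (p : nat -> nat -> bool) i := forall j, j < n -> ~~ p i j.
Definition ecoln m (p : nat -> nat -> bool) j := forall i, i < m -> ~~ p i j.
Definition lonelyn m n (p : nat -> nat -> bool) i j := p i j /\
  forall i' j', i' < m -> j' < n -> p i' j' -> (i' = i \/ j' = j) -> i' = i /\ j' = j.
Definition Pn m n p :=
  [/\ (forall i1 i2, i1 < m -> i2 < m -> erown n p i1 -> erown n p i2 -> i1 = i2),
      (forall j1 j2, j1 < n -> j2 < n -> ecoln m p j1 -> ecoln m p j2 -> j1 = j2),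
      (forall i1 j1 i2 j2, i1 < m -> j1 < n -> i2 < m -> j2 < n ->
         lonelyn m n p i1 j1 -> lonelyn m n p i2 j2 -> i1 = i2 /\ j1 = j2) &
      (forall i j r c, i < m -> j < n -> r < m -> c < n ->
         lonelyn m n p i j -> erown n p r -> ecoln m p c -> False)].

Lemma Pn_Pel m n p : Pn m n p -> Pel (cellW m n p).
Proof.
case=> P1 P2 P3 P4.
have Er : forall i : 'I_m, erow (cellW m n p) i -> erown n p i.
  move=> i E j hj; apply/negP => h.
  by apply: (E (i, Ordinal hj)); rewrite // inE.
have Ec : forall j : 'I_n, ecol (cellW m n p) j -> ecoln m p j.
  move=> j E i hi; apply/negP => h.
  by apply: (E (Ordinal hi, j)); rewrite // inE.
have El : forall w, lonely (cellW m n p) w -> lonelyn m n p w.1 w.2.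
  move=> w [hw L]; split; first by move: hw; rewrite inE.
  move=> i' j' hi hj hp e.
  have := L (Ordinal hi, Ordinal hj); rewrite inE /= => /(_ hp) H.
  have : (Ordinal hi, Ordinal hj) = w.
    by apply: H; case: e => e; [left|right]; exact: val_inj.
  by move=> <-.
split.
- by move=> i1 i2 /Er h1 /Er h2; apply: val_inj; apply: P1 (ltn_ord i1) (ltn_ord i2) h1 h2.
- by move=> j1 j2 /Ec h1 /Ec h2; apply: val_inj; apply: P2 (ltn_ord j1) (ltn_ord j2) h1 h2.
- move=> [a b] [c d] /El h1 /El h2.
  have [e1 e2] := P3 _ _ _ _ (ltn_ord a) (ltn_ord b) (ltn_ord c) (ltn_ord d) h1 h2.
  by rewrite (val_inj e1) (val_inj e2).
- move=> [a b] r c /El h1 /Er h2 /Ec h3.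
  exact: (P4 _ _ _ _ (ltn_ord a) (ltn_ord b) (ltn_ord r) (ltn_ord c) h1 h2 h3).
Qed.

Definition Ex m n c := exists p, Pn m n p /\ #|cellW m n p| <= c.

Lemma exW m n c c' : Ex m n c -> c <= c' -> Ex m n c'.
Proof. by case=> p [h1 h2] h; exists p; split => //; apply: leq_trans h. Qed.

Lemma Pn_T m n p : Pn m n p -> Pn n m (fun i j => p j i).
Proof.
case=> P1 P2 P3 P4; split.
- by move=> i1 i2 h1 h2 e1 e2; apply: P2.
- by move=> j1 j2 h1 h2 e1 e2; apply: P1.
- move=> i1 j1 i2 j2 h1 h2 h3 h4 [l1 L1] [l2 L2].
  have [] // := P3 j1 i1 j2 i2 h2 h1 h4 h3.
  + split => // a b ha hb hp e.
    by case: (L1 b a hb ha hp ltac:(by case: e; [right|left])) => -> ->.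
  + split => // a b ha hb hp e.
    by case: (L2 b a hb ha hp ltac:(by case: e; [right|left])) => -> ->.
- move=> i j r c h1 h2 h3 h4 [l1 L1] e1 e2.
  apply: (P4 j i c r h2 h1 h4 h3) => //.
  split => // a b ha hb hp e.
  by case: (L1 b a hb ha hp ltac:(by case: e; [right|left])) => -> ->.
Qed.

Lemma exT m n c : Ex m n c -> Ex n m c.
Proof.
case=> p [hp hc]; exists (fun i j => p j i); split; first exact: Pn_T.
apply: leq_trans hc.
have -> : cellW n m (fun i j => p j i) = [set (x.2, x.1) | x in cellW m n p].
  apply/setP => -[i j]; rewrite inE /=; apply/idP/imsetP => [h|[[a b] hab [-> ->]]].
    by exists (j, i); rewrite // inE.
  by move: hab; rewrite inE.
exact: leq_imset_card.
Qed.

Section StepA.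
Variables (m n : nat) (p : nat -> nat -> bool).
Definition pA i j := (p i j && (i < m) && (j < n)) || ((i == m) && ((j == n) || (j == n.+1))).

Lemma pA_in i j : i < m -> j < n -> pA i j = p i j.
Proof.
move=> hi hj; rewrite /pA hi hj !andbT.
have -> : (i == m) = false by apply/negbTE/eqP; lia.
by rewrite orbF.
Qed.

Lemma pA_row i j : i < m -> pA i j -> j < n.
Proof.
move=> hi; rewrite /pA; have -> : (i == m) = false by apply/negbTE/eqP; lia.
by rewrite orbF => /andP[].
Qed.

Lemma pA_m j : pA m j = (j == n) || (j == n.+1).
Proof. by rewrite /pA ltnn andbF eqxx. Qed.

Lemma er_down r : r < m.+1 -> erown n.+2 pA r -> r < m /\ erown n p r.
Proof.
move=> hr E.
have hrm : r < m.
  case: (ltngtP r m) => // e; [lia|]; move: (E n ltac:(lia)); rewrite e pA_m eqxx //.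
split => // j hj; move: (E j ltac:(lia)); rewrite pA_in //.
Qed.

Lemma ec_down c : c < n.+2 -> ecoln m.+1 pA c -> c < n /\ ecoln m p c.
Proof.
move=> hc E.
have hcn : c < n.
  case: (ltnP c n) => // h.
  move: (E m ltac:(lia)); rewrite pA_m.
  have : (c == n) || (c == n.+1) by apply/orP; case: (ltngtP c n) => e; [lia|right; apply/eqP; lia|left; apply/eqP].
  by move=> ->.
split => // i hi; move: (E i ltac:(lia)); rewrite pA_in //.
Qed.

Lemma lon_down i j : i < m.+1 -> j < n.+2 -> lonelyn m.+1 n.+2 pA i j ->
  [/\ i < m, j < n & lonelyn m n p i j].
Proof.
move=> hi hj [hp L].
have him : i < m.
  case: (ltngtP i m) => // e; [lia|].
  move: hp; rewrite e pA_m => /orP[] /eqP ej.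
    have := L m n.+1 ltac:(lia) ltac:(lia); rewrite pA_m eqxx orbT => /(_ isT (or_introl (esym e))) [_]; lia.
  have := L m n ltac:(lia) ltac:(lia); rewrite pA_m eqxx => /(_ isT (or_introl (esym e))) [_]; lia.
have hjn := pA_row him hp.
split => //; split; first by rewrite -pA_in.
move=> i' j' hi' hj' hp' e; apply: L => //; [lia|lia|by rewrite pA_in].
Qed.

Lemma Pn_A : Pn m n p -> Pn m.+1 n.+2 pA.
Proof.
case=> P1 P2 P3 P4; split.
- move=> i1 i2 h1 h2 /(er_down h1) [h1' e1] /(er_down h2) [h2' e2]; exact: P1.
- move=> j1 j2 h1 h2 /(ec_down h1) [h1' e1] /(ec_down h2) [h2' e2]; exact: P2.
- move=> i1 j1 i2 j2 h1 h2 h3 h4 /(lon_down h1 h2) [? ? l1] /(lon_down h3 h4) [? ? l2].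
  exact: P3 l1 l2.
- move=> i j r c h1 h2 h3 h4 /(lon_down h1 h2) [? ? l1] /(er_down h3) [? e1] /(ec_down h4) [? e2].
  exact: P4 l1 e1 e2.
Qed.

Lemma card_A : #|cellW m.+1 n.+2 pA| <= #|cellW m n p| + 2.
Proof.
pose emb (x : 'I_m * 'I_n) : 'I_m.+1 * 'I_n.+2 :=
  (widen_ord (leqnSn m) x.1, widen_ord (ltnW (leqnSn n.+1)) x.2).
have hm : m < m.+1 by [].
have hn0 : n < n.+2 by [].
have hn1 : n.+1 < n.+2 by [].
pose a : 'I_m.+1 * 'I_n.+2 := (Ordinal hm, Ordinal hn0).
pose b : 'I_m.+1 * 'I_n.+2 := (Ordinal hm, Ordinal hn1).
have sub : cellW m.+1 n.+2 pA \subset (emb @: cellW m n p) :|: [set a; b].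
  apply/subsetP => -[[i hi] [j hj]]; rewrite inE /= => h.
  case: (ltnP i m) => him.
    have hjn := pA_row him h.
    rewrite inE; apply/orP; left; apply/imsetP.
    exists (Ordinal him, Ordinal hjn); first by rewrite inE /= -pA_in.
    by congr pair; apply: val_inj.
  have ei : i = m by lia.
  move: h hi; rewrite ei pA_m => /orP[] /eqP ej hi; rewrite !inE; apply/orP; right;
    apply/orP; [left|right]; apply/eqP; congr pair; apply: val_inj => //=.
apply: leq_trans (subset_leq_card sub) _.
rewrite cardsU; apply: leq_trans (leq_subr _ _) _.
apply: leq_add; first exact: leq_imset_card.
by rewrite cards2; case: (a != b).
Qed.
End StepA.

Lemma exA m n c : Ex m n c -> Ex m.+1 n.+2 c.+2.
Proof.
case=> p [hp hc]; exists (pA m n p); split; first exact: Pn_A.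
apply: leq_trans (card_A m n p) _; rewrite addn2; exact: hc.
Qed.

Lemma exB m n c : Ex m n c -> Ex m.+2 n.+1 c.+2.
Proof. by move=> h; apply: exT; apply: exA; apply: exT. Qed.

Lemma ex11 : Ex 1 1 0.
Proof.
exists (fun _ _ => false); split.
  split; try by move=> *; lia.
  by move=> i j r c _ _ _ _ [].
have -> : cellW 1 1 (fun _ _ => false) = set0 by apply/setP => x; rewrite !inE.
by rewrite cards0.
Qed.

Lemma ex12 : Ex 1 2 1.
Proof.
exists (fun i j => (i == 0) && (j == 0)); split.
  split.
  - by move=> *; lia.
  - move=> j1 j2 h1 h2 e1 e2; move: (e1 0 isT) (e2 0 isT) => /=.
    case: j1 h1 {e1} => [|[|j1]] //; case: j2 h2 {e2} => [|[|j2]] //.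
  - move=> i1 j1 i2 j2 h1 h2 h3 h4 [p1 _] [p2 _]; move: p1 p2.
    by case/andP => /eqP -> /eqP -> /andP[/eqP -> /eqP ->].
  - by move=> i j r c h1 _ h3 _ _ e; move: (e 0 isT); have -> : r = 0 by lia.
apply: leq_trans (_ : #|[set ((ord0 : 'I_1), (ord0 : 'I_2))]| <= 1); last by rewrite cards1.
apply: subset_leq_card; apply/subsetP => -[[i hi] [j hj]]; rewrite !inE /= => /andP[/eqP ei /eqP ej].
apply/eqP; congr pair; apply: val_inj => //=.
Qed.

Lemma ex22 : Ex 2 2 2.
Proof.
exists (fun i j => (i == 0) && (j < 2)); split.
  split.
  - move=> i1 i2 h1 h2 e1 e2; move: (e1 0 isT) (e2 0 isT) => /=.
    case: i1 h1 {e1} => [|[|i1]] //; case: i2 h2 {e2} => [|[|i2]] //.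
  - by move=> j1 j2 h1 h2 e1; move: (e1 0 isT) => /=; rewrite h1.
  - move=> i1 j1 i2 j2 h1 h2 h3 h4 [p1 L1] _; exfalso.
    move: p1 => /andP[/eqP ei _].
    have := L1 0 (1 - j1) isT ltac:(lia) ltac:(by rewrite /=; lia) (or_introl (esym ei)).
    case=> _; lia.
  - by move=> i j r c _ _ _ h4 _ _ e; move: (e 0 isT) => /=; rewrite h4.
apply: leq_trans (_ : #|(fun j => ((ord0 : 'I_2), j)) @: [set: 'I_2]| <= 2).
  apply: subset_leq_card; apply/subsetP => -[[i hi] [j hj]]; rewrite !inE /= => /andP[/eqP ei _].
  apply/imsetP; exists (Ordinal hj); rewrite ?inE //; congr pair; apply: val_inj => //=.
by apply: leq_trans (leq_imset_card _ _) _; rewrite cardsT card_ord.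
Qed.

Definition kk m n := (2 * (m + n - 2) + 2) %/ 3.

Lemma construct s : forall m n, m + n <= s -> 3 <= m -> m <= n -> n <= 2 * m - 2 ->
  Ex m n (kk m n).
Proof.
elim: s => [|s IH] m n hs h1 h2 h3; first lia.
case: (ltnP 3 m) => hm3.
  case: (ltnP m n) => hmn.
    have := IH (m - 1) (n - 2) ltac:(lia) ltac:(lia) ltac:(lia) ltac:(lia).
    move/exA; have -> : (m - 1).+1 = m by lia. have -> : (n - 2).+2 = n by lia.
    move/exW; apply; rewrite /kk; lia.
  have en : n = m by lia.
  rewrite en; case: (ltnP 4 m) => hm4.
    have := IH (m - 2) (m - 1) ltac:(lia) ltac:(lia) ltac:(lia) ltac:(lia).
    move/exB; have -> : (m - 2).+2 = m by lia. have -> : (m - 1).+1 = m by lia.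
    move/exW; apply; rewrite /kk; lia.
  have -> : m = 4 by lia.
  by apply: (exB (exA ex11)).
have -> : m = 3 by lia.
have : n = 3 \/ n = 4 by lia.
case=> ->.
  exact: (exB ex12).
exact: (exA ex22).
Qed.

Lemma bigmin_le (I : finType) (P : pred I) (F : I -> nat) x j :
  P j -> \big[minn/x]_(i | P i) F i <= F j.
Proof.
move=> Pj.
have : j \in index_enum I by rewrite mem_index_enum.
elim: (index_enum I) => [//|a r IH]; rewrite inE big_cons => /orP[/eqP <-|h].
  by rewrite Pj; exact: geq_minl.
case: (P a); last exact: IH.
by apply: leq_trans (geq_minr _ _) (IH h).
Qed.

Lemma divle a b : 2 * a <= 3 * b -> (2 * a + 2) %/ 3 <= b.
Proof. lia. Qed.

Theorem proposition3p6 (m n : nat) :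
  3 <= m -> m <= n -> n <= 2 * m - 2 ->
  metric_dim (tensor_graph (complete_graph m) (complete_graph n))
  = (2 * (m + n - 2) + 2) %/ 3.
Proof.
move=> h1 h2 h3.
have hn : 3 <= n by lia.
apply/eqP; rewrite eqn_leq; apply/andP; split.
  have [p [hp hc]] := construct (leqnn (m + n)) h1 h2 h3.
  apply: leq_trans hc.
  apply: (bigmin_le (P := fun W => resolving (@G m n) W)).
  exact: (Pel_res h1 hn (Pn_Pel hp)).
rewrite /metric_dim; elim/big_ind: _.
- rewrite card_prod !card_ord; nia.
- by move=> x y hx hy; rewrite leq_min hx hy.
- move=> W hW; have := lower_count (res_Pel h1 hn hW); exact: divle.
Qed.
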